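(* Let $\Psi(x)=\sup\left\{\lfloor t\rfloor\log\left(1+\frac{x}{t^2}\right):t\geq1\right\}$ for $x\geq0$. Then \[ \Psi(x)\geq\frac{\log 5}{4}\min(x;\sqrt x)\qquad\text{for all }x\geq0. \] *)

(* Defs.v *)
From Stdlib Require Import Reals.
Open Scope R_scope.

Definition Psi_set (x : R) : R -> Prop :=
  fun y => exists t : R, 1 <= t /\ y = IZR (Int_part t) * ln (1 + x / (t ^ 2)).

Definition is_Psi (x L : R) : Prop := is_lub (Psi_set x) L.

(* Main.v *)
Require Import Defs.
From Stdlib Require Import Reals Lra Lia.
Open Scope R_scope.

Lemma exp_ge1 (y : R) : 1 + y <= exp y.
Proof.
  destruct (Req_dec y 0) as [->|H].
  - rewrite exp_0; lra.
  - left; now apply exp_ineq1.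
Qed.

Lemma ln_mono (a b : R) : 0 < a -> a <= b -> ln a <= ln b.
Proof.
  intros Ha [Hab| ->]; [left; now apply ln_increasing | lra].
Qed.

Lemma ln_le_sub1 (a : R) : 0 < a -> ln a <= a - 1.
Proof.
  intros Ha. rewrite <- (ln_exp (a - 1)). apply ln_mono; auto.
  pose proof (exp_ge1 (a - 1)); lra.
Qed.

Lemma ln_lower (x : R) : 0 <= x -> x / (1 + x) <= ln (1 + x).
Proof.
  intros Hx.
  assert (H := ln_le_sub1 (/ (1 + x)) ltac:(apply Rinv_0_lt_compat; lra)).
  rewrite ln_Rinv in H by lra.
  assert (/ (1 + x) - 1 = - (x / (1 + x))) by (field; lra).
  lra.
Qed.

Lemma ln5_le2 : ln 5 <= 2.
Proof.
  rewrite <- (ln_exp 2). apply ln_mono; [lra|].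
  replace 2 with (/2 + /2 + /2 + /2) by lra.
  rewrite !exp_plus.
  pose proof (exp_ge1 (/2)).
  assert (0 <= exp (/2)) by (left; apply exp_pos).
  assert (3/2 <= exp (/2)) by lra.
  set (e := exp (/2)) in *.
  assert (9/4 <= e * e) by nra.
  nra.
Qed.

Lemma ln_cmp (a b : R) (n m : nat) : 0 < a -> 0 < b -> b ^ m <= a ^ n ->
  INR m * ln b <= INR n * ln a.
Proof.
  intros Ha Hb H. rewrite <- !ln_pow by auto.
  apply ln_mono; auto. apply pow_lt; auto.
Qed.

Theorem lemma1p10 : forall x L : R, 0 <= x -> is_Psi x L ->
  L >= ln 5 / 4 * Rmin x (sqrt x).
Proof.
  intros x L Hx [Hub _].
  pose proof ln5_le2 as H5.
  assert (Hl5 : 0 < ln 5) by (rewrite <- ln_1; apply ln_increasing; lra).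
  assert (Hm1 : Rmin x (sqrt x) <= x) by apply Rmin_l.
  assert (Hm2 : Rmin x (sqrt x) <= sqrt x) by apply Rmin_r.
  assert (Hm0 : 0 <= Rmin x (sqrt x)).
  { apply Rmin_glb; auto; apply sqrt_pos. }
  destruct (Rle_or_lt x 4) as [H4|H4].
  -
    assert (Hin : Psi_set x (ln (1 + x))).
    { exists 1. split; [lra|].
      replace (Int_part 1) with 1%Z.
      + simpl. replace (x / (1 * (1 * 1))) with x by field. ring.
      + unfold Int_part. rewrite <- (up_tech 1 1); simpl; try lra; reflexivity.
    }
    apply Hub in Hin.
    apply Rle_ge. eapply Rle_trans; [|exact Hin].
    destruct (Rle_or_lt x 1) as [H1|H1].
    + pose proof (ln_lower x Hx).
      assert (x / 2 <= x / (1 + x)).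
      { unfold Rdiv. apply Rmult_le_compat_l; auto.
        apply Rinv_le_contravar; lra. }
      nra.
    + assert (Hs : sqrt x <= 2).
      { rewrite <- sqrt_square with (x := 2) by lra. apply sqrt_le_1; lra. }
      destruct (Rle_or_lt x (9/4)) as [H9|H9].
      * assert (Hs' : sqrt x <= 3/2).
        { rewrite <- sqrt_square with (x := 3/2) by lra. apply sqrt_le_1; lra. }
        assert (H2 : INR 3 * ln 5 <= INR 8 * ln 2) by (apply ln_cmp; simpl; lra).
        assert (ln 2 <= ln (1 + x)) by (apply ln_mono; lra).
        simpl in H2. nra.
      * assert (H2 : INR 1 * ln 5 <= INR 2 * ln (13/4)) by (apply ln_cmp; simpl; lra).
        assert (ln (13/4) <= ln (1 + x)) by (apply ln_mono; lra).
        simpl in H2. nra.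
  - set (t := sqrt x / 2).
    assert (Hsx : 2 < sqrt x).
    { rewrite <- sqrt_square with (x := 2) by lra. apply sqrt_lt_1; lra. }
    assert (Ht : 1 <= t) by (unfold t; lra).
    assert (Ht2 : t ^ 2 = x / 4).
    { unfold t. simpl. rewrite Rmult_1_r.
      replace (sqrt x / 2 * (sqrt x / 2)) with (sqrt x * sqrt x / 4) by field.
      rewrite sqrt_sqrt; lra. }
    assert (Hin : Psi_set x (IZR (Int_part t) * ln 5)).
    { exists t. split; auto. rewrite Ht2. do 2 f_equal. field. lra. }
    apply Hub in Hin.
    destruct (base_Int_part t) as [B1 B2].
    assert (Hn : t / 2 <= IZR (Int_part t)).
    { assert (0 < IZR (Int_part t)) by lra.
      apply lt_0_IZR in H.
      assert (H1 : (1 <= Int_part t)%Z) by lia. apply IZR_le in H1. simpl in H1.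
      lra. }
    apply Rle_ge. eapply Rle_trans; [|exact Hin].
    assert (Hte : t = sqrt x / 2) by reflexivity. clearbody t.
    assert (ln 5 * (t / 2) <= ln 5 * IZR (Int_part t)) by (apply Rmult_le_compat_l; lra).
    assert (ln 5 / 4 * Rmin x (sqrt x) <= ln 5 / 4 * sqrt x) by (apply Rmult_le_compat_l; lra).
    subst t. lra.
Qed.
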